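(* Let $E$ be a locally compact separable metric space, $Q(x,dy)$ a probability kernel on $(E,\mathcal{B}(E))$ with $Q(x,\{x\})=0$ for all $x\in E$, and $m_0$ a $\sigma$-finite measure fully supported on $E$ with $Q(x,dy)m_0(dx)=Q(y,dx)m_0(dy)$. Let $\lambda$ be a bounded Borel function on $E$ with $0<\lambda(x)<\infty$, and suppose $m(dx):=\lambda(x)^{-1}m_0(dx)$ is a Radon measure. Let $(\mathcal{E},\mathcal{F})$ be the Dirichlet form on $L^2(E,m)$ given by $\mathcal{F}=L^2(E,m)$ and $$\mathcal{E}(u,v)=\frac12\int_{E\times E}(u(x)-u(y))(v(x)-v(y))Q(x,dy)\lambda(x)m(dx)+\int_E u(x)v(x)(1-Q(x,E))\lambda(x)m(dx),$$ which is a regular Dirichlet form (associated with the pure jump step process with road map $Q$ and speed function $\lambda$). If $(\mathcal{E}',\mathcal{F}')$ is a regular Dirichlet subspace of $(\mathcal{E},\mathcal{F})$, then $(\mathcal{E}',\mathcal{F}')=(\mathcal{E},\mathcal{F})$.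
   Context: A regular Dirichlet subspace of a regular Dirichlet form $(\mathcal{E},\mathcal{F})$ on $L^2(E,m)$ is a regular Dirichlet form $(\mathcal{E}',\mathcal{F}')$ on $L^2(E,m)$ with $\mathcal{F}'\subset\mathcal{F}$ and $\mathcal{E}'(u,v)=\mathcal{E}(u,v)$ for all $u,v\in\mathcal{F}'$. *)

(* Defs.v *)
From HB Require Import structures.
From mathcomp Require Import all_boot all_order all_algebra.
From mathcomp Require Import all_classical all_reals all_analysis.

Set Implicit Arguments.
Unset Strict Implicit.
Unset Printing Implicit Defensive.

Import Order.TTheory GRing.Theory Num.Theory.
Import numFieldNormedType.Exports.

Local Open Scope classical_set_scope.
Local Open Scope ring_scope.

(* [borelE x0] is the carrier of the metric space E, equipped with the Borel
   sigma-algebra generated by the open sets of E (x0 only witnesses that E is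
   nonempty, as required by MathComp-Analysis' measurable types). *)
Definition borelE (R : realType) (E : metricType R) (x0 : E) : Type := E.

Section borelE_instance.
Variables (R : realType) (E : metricType R) (x0 : E).

Lemma borelE_sigmaC (A : set E) :
  <<s @open E >> A -> <<s @open E >> (~` A).
Proof. by move=> sGA; rewrite -setTD; exact: sigma_algebraCD. Qed.

HB.instance Definition _ := Choice.on (borelE x0).
HB.instance Definition _ := isPointed.Build (borelE x0) x0.
HB.instance Definition _ := @isMeasurable.Build (sigma_display (@open E))
  (borelE x0) <<s @open E >> (@sigma_algebra0 _ setT (@open E))
  (@borelE_sigmaC) (@sigma_algebra_bigcup _ setT (@open E)).
End borelE_instance.

Definition separable_space (T : topologicalType) : Prop :=
  exists D : set T, countable D /\ dense D.

Definition Cc (R : realType) (E : metricType R) (u : E -> R) : Prop :=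
  continuous u /\ exists K : set E, compact K /\ (forall x, ~ K x -> u x = 0).

Section L2.
Variables (R : realType) (E : metricType R) (x0 : E).
Local Notation T := (borelE x0).
Variable m : {measure set T -> \bar R}.

Definition L2 (u : T -> R) : Prop :=
  measurable_fun setT u /\ (\int[m]_x ((u x) ^+ 2)%:E < +oo)%E.

Definition ae_eq_fun (u v : T -> R) : Prop := {ae m, forall x, u x = v x}.

Definition L2inner (u v : T -> R) : R := fine (\int[m]_x (u x * v x)%:E).

Definition fsub (u v : T -> R) : T -> R := fun x => u x - v x.

(* Elements of L^2 are represented by their measurable
   representatives; F is closed under m-a.e. equality and Ef does not depend
   on the choice of representatives. *)
Definition dirichlet_form (F : set (T -> R)) (Ef : (T -> R) -> (T -> R) -> R)
  : Prop :=
  let E1 u v := Ef u v + L2inner u v in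
  (forall u, F u -> L2 u) /\
  (forall u v, F u -> L2 v -> ae_eq_fun u v -> F v) /\
  F (fun _ => 0) /\
  (forall u v, F u -> F v -> F (fun x => u x + v x)) /\
  (forall (a : R) u, F u -> F (fun x => a * u x)) /\
  (forall f, L2 f -> forall eps : R, 0 < eps ->
     exists2 u, F u & L2inner (fsub f u) (fsub f u) < eps) /\
  (forall u u' v, F u -> F u' -> F v -> ae_eq_fun u u' -> Ef u v = Ef u' v) /\
  (forall u v, F u -> F v -> Ef u v = Ef v u) /\
  (forall u w v, F u -> F w -> F v ->
     Ef (fun x => u x + w x) v = Ef u v + Ef w v) /\
  (forall (a : R) u v, F u -> F v -> Ef (fun x => a * u x) v = a * Ef u v) /\
  (forall u, F u -> 0 <= Ef u u) /\
  (forall un : nat -> T -> R, (forall n, F (un n)) ->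
     (forall eps : R, 0 < eps -> exists N, forall n k, (N <= n)%N -> (N <= k)%N ->
        E1 (fsub (un n) (un k)) (fsub (un n) (un k)) < eps) ->
     exists2 u, F u &
       (fun n => E1 (fsub (un n) u) (fsub (un n) u)) @ \oo --> (0 : R)) /\
  (forall u, F u ->
     let v := fun x => Order.min (Order.max (u x) 0) 1 in
     F v /\ Ef v v <= Ef u u).

Definition regular_form (F : set (T -> R)) (Ef : (T -> R) -> (T -> R) -> R)
  : Prop :=
  let E1 u v := Ef u v + L2inner u v in
  (forall u, F u -> forall eps : R, 0 < eps ->
     exists g : T -> R, [/\ Cc (g : E -> R), F g &
       E1 (fsub u g) (fsub u g) < eps]) /\
  (forall f : T -> R, Cc (f : E -> R) -> forall eps : R, 0 < eps ->
     exists g : T -> R, [/\ Cc (g : E -> R), F g &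
       forall x, `|f x - g x| < eps]).

Definition regular_dirichlet_form F Ef :=
  dirichlet_form F Ef /\ regular_form F Ef.

Definition regular_dirichlet_subspace (F' : set (T -> R)) Ef'
    (F : set (T -> R)) (Ef : (T -> R) -> (T -> R) -> R) : Prop :=
  regular_dirichlet_form F' Ef' /\ F' `<=` F /\
  (forall u v, F' u -> F' v -> Ef' u v = Ef u v).

End L2.

Section jump_form.
Variables (R : realType) (E : metricType R) (x0 : E).
Local Notation T := (borelE x0).

Definition jump_form (Q : R.-pker T ~> T) (lam : T -> R)
  (m : {measure set T -> \bar R}) (u v : T -> R) : R :=
  fine ((2^-1)%:E *
          \int[m]_x ((lam x)%:E *
                       \int[Q x]_y ((u x - u y) * (v x - v y))%:E)
        + \int[m]_x ((u x * v x * (1 - fine (Q x setT)) * lam x)%:E))%E.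

End jump_form.

(* Main.v *)
Require Import Defs.
From HB Require Import structures.
From mathcomp Require Import all_boot all_order all_algebra.
From mathcomp Require Import all_classical all_reals all_analysis.
From mathcomp Require Import measurable_realfun.
From mathcomp Require Import ring lra.

Import Order.TTheory GRing.Theory Num.Theory.
Import numFieldNormedType.Exports.

Local Open Scope classical_set_scope.
Local Open Scope ring_scope.


Section transfer.
Local Open Scope ereal_scope.
Context d d' (X : measurableType d) (Y : measurableType d') (R : realType).
Variables (mu : {measure set X -> \bar R}) (nu : {measure set Y -> \bar R})
  (l : X -> {measure set Y -> \bar R})
  (ml : forall U, measurable U -> measurable_fun [set: X] (fun x => l x U))
  (hl : forall A, measurable A -> \int[mu]_x l x A = nu A).

Let transfer_indic E (mE : measurable E) :
  \int[mu]_x (\int[l x]_z (\1_E z)%:E) = \int[nu]_z (\1_E z)%:E.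
Proof.
rewrite integral_indic// setIT -hl//.
by apply: eq_integral => y _; rewrite integral_indic// setIT.
Qed.

Import HBNNSimple.

Let transfer_nnsfun (f : {nnsfun Y >-> R}) :
  \int[mu]_x (\int[l x]_z (f z)%:E) = \int[nu]_z (f z)%:E.
Proof.
under [in RHS]eq_integral do rewrite fimfunE -fsumEFin//.
rewrite [RHS]ge0_integral_fsum//; last 2 first.
  - by move=> r; exact/measurable_EFinP/measurableT_comp.
  - by move=> r z _; rewrite EFinM nnfun_muleindic_ge0.
under [in LHS]eq_integral.
  move=> y _.
  under eq_integral.
    by move=> z _; rewrite fimfunE -fsumEFin//; over.
  rewrite /= ge0_integral_fsum//; last 2 first.
    - by move=> r; exact/measurable_EFinP/measurableT_comp.
    - by move=> r z _; rewrite EFinM nnfun_muleindic_ge0.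
  under eq_fsbigr.
    move=> r _.
    rewrite (integralZl_indic _ (fun r => f @^-1` [set r]))//; last first.
      by move=> r0; rewrite preimage_nnfun0.
    rewrite integral_indic// setIT.
    over.
  over.
rewrite /= ge0_integral_fsum//; last 2 first.
  - move=> r; apply: measurable_funeM.
    exact: ml.
  - move=> n y _.
    have := mulemu_ge0 (fun n => f @^-1` [set n]).
    by apply; exact: preimage_nnfun0.
apply: eq_fsbigr => r _.
rewrite (integralZl_indic _ (fun r => f @^-1` [set r]))//; last first.
  exact: preimage_nnfun0.
rewrite /= -transfer_indic//.
have [r0|r0] := leP 0%R r.
  rewrite ge0_integralZl//.
    by congr (_ * _); apply: eq_integral => x _; rewrite integral_indic// setIT.
  exact: ml.
rewrite preimage_nnfun0//.
rewrite integral0_eq; last by move=> x _; rewrite measure0 mule0.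
rewrite integral0_eq ?mule0// => x _.
by rewrite integral0_eq// => z _; rewrite indic0.
Qed.

Lemma transfer f : (forall z, 0 <= f z) -> measurable_fun [set: Y] f ->
  \int[mu]_x (\int[l x]_z f z) = \int[nu]_z f z.
Proof.
move=> f0 mf.
pose f_ := nnsfun_approx measurableT mf.
transitivity (\int[mu]_x lim ((\int[l x]_z (f_ n z)%:E) @[n --> \oo])).
  apply: eq_integral => y _; rewrite -monotone_convergence//; last 3 first.
  - by move=> n; exact/measurable_EFinP.
  - by move=> n z _; rewrite lee_fin.
  - by move=> z _ a b ab; rewrite lee_fin; exact/lefP/nd_nnsfun_approx.
  by apply: eq_integral => z _; apply/esym/cvg_lim => //; exact: cvg_nnsfun_approx.
rewrite monotone_convergence//; last 3 first.
  - move=> n; apply: measurable_fun_integral_kernel => //.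
    + by move=> z; rewrite lee_fin.
    + exact/measurable_EFinP.
  - by move=> n y _; apply: integral_ge0 => // z _; rewrite lee_fin.
  - move=> y _ a b ab; apply: ge0_le_integral => //.
    + by move=> z _; rewrite lee_fin.
    + exact/measurable_EFinP.
    + exact/measurable_EFinP.
    + by move=> z _; rewrite lee_fin; exact/lefP/nd_nnsfun_approx.
rewrite (_ : (fun _ => _) = (fun n => \int[nu]_z (f_ n z)%:E)); last first.
  by apply/funext => n; rewrite transfer_nnsfun.
rewrite -monotone_convergence//; last 3 first.
  - by move=> n; exact/measurable_EFinP.
  - by move=> n z _; rewrite lee_fin.
  - by move=> z _ a b ab; rewrite lee_fin; exact/lefP/nd_nnsfun_approx.
by apply: eq_integral => z _; apply/cvg_lim => //; exact: cvg_nnsfun_approx.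
Qed.
End transfer.

Section dens.
Local Open Scope ereal_scope.
Context d (T : measurableType d) (R : realType).
Variables (m0 m : {measure set T -> \bar R}) (lam : T -> R)
  (lam_meas : measurable_fun setT lam) (lam_pos : forall x, (0 < lam x)%R)
  (m_def : forall A : set T, measurable A ->
     m A = (\int[m0]_(x in A) ((lam x)^-1)%:E)%E).

Let ilam_ge0 x : (0 <= (lam x)^-1)%R.
Proof. by rewrite invr_ge0 ltW. Qed.

Let l x : {measure set T -> \bar R} := mscale (NngNum (ilam_ge0 x)) (\d_ x).

Let ml U : measurable U -> measurable_fun [set: T] (fun x => l x U).
Proof.
move=> mU.
rewrite (_ : (fun x => l x U) = fun x => ((lam x `^ (-1)) * \1_U x)%:E)%R; last first.
  apply/funext => x; rewrite /l.
  change ((((lam x)^-1)%:E * \d_x U)%E = (((lam x `^ (-1)) * \1_U x)%R)%:E).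
  by rewrite diracE EFinM powR_inv1// ltW.
apply/measurable_EFinP; apply: measurable_funM.
  exact: (measurableT_comp (measurable_powR (-1)%R) lam_meas).
exact: measurable_indic.
Qed.

Let hl A : measurable A -> \int[m0]_x l x A = m A.
Proof.
move=> mA; rewrite m_def// [RHS]integral_mkcond; apply: eq_integral => x _.
rewrite patchE; change (((lam x)^-1)%:E * \d_x A = (if x \in A then ((lam x)^-1)%:E else 0)); rewrite diracE.
by case: ifPn => _; rewrite ?mule1 ?mule0.
Qed.

Lemma dens g : (forall x, 0 <= g x) -> measurable_fun setT g ->
  \int[m]_x g x = \int[m0]_x (((lam x)^-1)%:E * g x).
Proof.
move=> g0 mg; rewrite -(@transfer _ _ _ _ _ m0 m l ml hl g g0 mg).
apply: eq_integral => x _.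
rewrite ge0_integral_mscale//= integral_dirac// diracT mul1e. reflexivity.
Qed.
End dens.

Section bound.
Local Open Scope ereal_scope.
Context (R : realType) (E : metricType R) (x0 : E).
Local Notation T := (borelE x0).
Variables (Q : R.-pker T ~> T) (m0 m : {measure set T -> \bar R}) (lam : T -> R)
  (lam_meas : measurable_fun setT lam) (lam_pos : forall x, (0 < lam x)%R)
  (M : R) (lam_le : forall x, (lam x <= M)%R)
  (m_def : forall A : set T, measurable A ->
     m A = (\int[m0]_(x in A) ((lam x)^-1)%:E)%E)
  (m0_sym : forall A B : set T, measurable A -> measurable B ->
     (\int[m0]_(x in A) Q x B = \int[m0]_(y in B) Q y A)%E).

Let Qsym A : measurable A -> \int[m0]_x Q x A = m0 A.
Proof.
move=> mA; rewrite m0_sym//.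
rewrite (eq_integral (cst 1)); last by move=> y _; rewrite prob_kernel.
by rewrite integral_cst// mul1e.
Qed.

Let Qtransfer g : (forall y, 0 <= g y) -> measurable_fun setT g ->
  \int[m0]_x \int[Q x]_y g y = \int[m0]_y g y.
Proof.
move=> g0 mg; apply: (@transfer _ _ _ _ _ m0 m0 Q) => //.
by move=> U mU; exact: measurable_kernel.
Qed.

Lemma jump_bound (w : T -> R) : measurable_fun setT w ->
  \int[m]_x ((lam x)%:E * \int[Q x]_y ((w x - w y) * (w x - w y))%:E)
  <= (4 * M)%:E * \int[m]_x ((w x) ^+ 2)%:E.
Proof.
move=> mw.
set h := fun x => \int[Q x]_y ((w x - w y) * (w x - w y))%:E.
have h0 x : 0 <= h x.
  by apply: integral_ge0 => y _; rewrite lee_fin -expr2 sqr_ge0.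
have mh : measurable_fun setT h.
  apply: (measurable_fun_integral_finite_kernel
    (fun p : T * T => ((w p.1 - w p.2) * (w p.1 - w p.2))%:E) Q).
    by move=> p; rewrite lee_fin -expr2 sqr_ge0.
  have m1 : measurable_fun setT (fun p : T * T => w p.1).
    exact: measurableT_comp mw measurable_fst.
  have m2 : measurable_fun setT (fun p : T * T => w p.2).
    exact: measurableT_comp mw measurable_snd.
  by apply/measurable_EFinP; apply: measurable_funM; exact: measurable_funB.
have sq0 x : (0 <= (w x) ^+ 2)%R by rewrite sqr_ge0.
have msq : measurable_fun setT (fun x => ((w x) ^+ 2)%:E).
  by apply/measurable_EFinP; exact: measurable_funX.
change (\int[m]_x ((lam x)%:E * h x) <= (4 * M)%:E * \int[m]_x ((w x) ^+ 2)%:E).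
have -> : \int[m]_x ((lam x)%:E * h x) = \int[m0]_x h x.
  rewrite (@dens _ _ _ m0 m lam lam_meas lam_pos m_def); last 2 first.
  - by move=> x; rewrite mule_ge0// lee_fin ltW.
  - by apply: emeasurable_funM => //; exact/measurable_EFinP.
  apply: eq_integral => x _.
  by rewrite muleA -EFinM mulVf ?mul1e// gt_eqF.
set g2 := fun x => \int[Q x]_y ((w y) ^+ 2)%:E.
have g20 x : 0 <= g2 x by apply: integral_ge0 => y _; rewrite lee_fin.
have mg2 : measurable_fun setT g2.
  by apply: measurable_fun_integral_kernel => //; exact: measurable_kernel.
have hle x : h x <= (2 * (w x) ^+ 2)%:E + 2%:E * g2 x.
  have mwy : measurable_fun setT (fun y => (w x - w y)%R).
    exact: measurable_funB (measurable_cst _) mw.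
  have msy : measurable_fun setT (fun y => (2 * (w y)^+2)%R).
    exact: measurable_funM (measurable_cst _) (measurable_funX 2 mw).
  rewrite /h.
  apply: (@le_trans _ _ (\int[Q x]_y ((2 * (w x)^+2)%:E + (2 * (w y)^+2)%:E))).
    apply: ge0_le_integral => //.
    - by move=> y _; rewrite lee_fin -expr2 sqr_ge0.
    - by apply/measurable_EFinP; exact: (measurable_funM mwy mwy).
    - apply: emeasurable_funD; [exact: measurable_cst|exact/measurable_EFinP].
    - move=> y _; rewrite -EFinD lee_fin.
      rewrite -subr_ge0.
      have -> : (2 * w x ^+ 2 + 2 * w y ^+ 2 - (w x - w y) * (w x - w y) =
                 (w x + w y) ^+ 2)%R by ring.
      exact: sqr_ge0.
  rewrite ge0_integralD//; last 3 first.
  - by move=> y _; rewrite lee_fin mulr_ge0.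
  - by move=> y _; rewrite lee_fin mulr_ge0.
  - exact/measurable_EFinP.
  rewrite integral_cst// prob_kernel mule1.
  under eq_integral do rewrite EFinM.
  by rewrite ge0_integralZl_EFin//; move=> y _; rewrite lee_fin.
have M0 : (0 <= M)%R by apply: le_trans (lam_le x0); exact: ltW.
have S_eq : \int[m0]_x ((w x)^+2)%:E = \int[m]_x ((lam x * (w x)^+2)%R)%:E.
  rewrite (@dens _ _ _ m0 m lam lam_meas lam_pos m_def); last 2 first.
  - by move=> x; rewrite lee_fin mulr_ge0// ltW.
  - by apply/measurable_EFinP; apply: measurable_funM => //; exact: measurable_funX.
  apply: eq_integral => x _.
  by rewrite -EFinM mulrA mulVf ?mul1r// gt_eqF.
have S_le : \int[m]_x ((lam x * (w x)^+2)%R)%:E <= M%:E * \int[m]_x ((w x)^+2)%:E.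
  rewrite -ge0_integralZl_EFin//; last by move=> x _; rewrite lee_fin.
  apply: ge0_le_integral => //.
  - by move=> x _; rewrite lee_fin mulr_ge0// ltW.
  - by apply/measurable_EFinP; apply: measurable_funM => //; exact: measurable_funX.
  - by apply: emeasurable_funM => //; exact: measurable_cst.
  - by move=> x _; rewrite -EFinM lee_fin ler_wpM2r.
have step : \int[m0]_x h x <= \int[m0]_x ((2 * (w x) ^+ 2)%:E + 2%:E * g2 x).
  apply: ge0_le_integral => //.
  apply: emeasurable_funD; last exact: emeasurable_funM.
  by apply/measurable_EFinP; apply: measurable_funM => //; exact: measurable_funX.
apply: (le_trans step).
have m2sq : measurable_fun setT (fun x => (2 * (w x) ^+ 2)%:E).
  by apply/measurable_EFinP; apply: measurable_funM => //; exact: measurable_funX.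
have sq2 x : 0 <= (2 * (w x) ^+ 2)%:E by rewrite lee_fin mulr_ge0.
have g2' x : 0 <= 2%:E * g2 x by rewrite mule_ge0.
rewrite ge0_integralD//; last exact: emeasurable_funM.
rewrite ge0_integralZl_EFin// Qtransfer//.
under eq_integral do rewrite EFinM.
rewrite ge0_integralZl_EFin//; last by move=> x _; rewrite lee_fin.
rewrite -ge0_muleDl// -EFinD S_eq.
rewrite (_ : (2 + 2 = 4 :> R)%R); last by ring.
rewrite EFinM -muleA.
by apply: lee_wpmul2l => //; rewrite lee_fin.
Qed.
End bound.

Section L2facts.
Local Open Scope ereal_scope.
Context (R : realType) (E : metricType R) (x0 : E).
Local Notation T := (borelE x0).
Variable m : {measure set T -> \bar R}.

Definition sq (u : T -> R) := \int[m]_x ((u x) ^+ 2)%:E.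

Lemma sq_ge0 u : 0 <= sq u.
Proof. by apply: integral_ge0 => x _; rewrite lee_fin sqr_ge0. Qed.

Lemma L2_fin u : L2 m u -> sq u \is a fin_num.
Proof. by case=> _ h; rewrite ge0_fin_numE// sq_ge0. Qed.

Lemma L2inner_sq u : L2inner m u u = fine (sq u).
Proof. by rewrite /L2inner /sq; congr fine; apply: eq_integral => x _; rewrite expr2. Qed.

Lemma sq_le2 (f g h : T -> R) : measurable_fun setT f -> measurable_fun setT g ->
  measurable_fun setT h ->
  (forall x, h x ^+ 2 <= 2 * f x ^+ 2 + 2 * g x ^+ 2)%R ->
  sq h <= 2%:E * sq f + 2%:E * sq g.
Proof.
move=> mf mg mh hfg.
have mf2 : measurable_fun setT (fun x => (2 * f x ^+ 2)%:E).
  by apply/measurable_EFinP; apply: measurable_funM => //; exact: measurable_funX.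
have mg2 : measurable_fun setT (fun x => (2 * g x ^+ 2)%:E).
  by apply/measurable_EFinP; apply: measurable_funM => //; exact: measurable_funX.
have f20 x : 0 <= (2 * f x ^+ 2)%:E by rewrite lee_fin mulr_ge0// sqr_ge0.
have g20 x : 0 <= (2 * g x ^+ 2)%:E by rewrite lee_fin mulr_ge0// sqr_ge0.
apply: (@le_trans _ _ (\int[m]_x ((2 * f x ^+ 2)%:E + (2 * g x ^+ 2)%:E))%E).
  apply: ge0_le_integral => //.
  - by move=> x _; rewrite lee_fin sqr_ge0.
  - by apply/measurable_EFinP; exact: measurable_funX.
  - exact: emeasurable_funD.
  - by move=> x _; rewrite -EFinD lee_fin.
rewrite ge0_integralD//.
have sqZ (k : T -> R) : measurable_fun setT k ->
    \int[m]_x (2 * k x ^+ 2)%:E = 2%:E * sq k.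
  move=> mk; rewrite /sq -ge0_integralZl_EFin//.
  all: try (by move=> x _; rewrite lee_fin sqr_ge0).
  all: try (by apply/measurable_EFinP; exact: measurable_funX).
  all: try (by apply: eq_integral => x _; rewrite EFinM).
by rewrite !sqZ.
Qed.

Lemma L2_fsub u v : L2 m u -> L2 m v -> L2 m (fsub u v).
Proof.
move=> [mu hu] [mv hv]; have mw : measurable_fun setT (fsub u v).
  exact: measurable_funB.
split => //; rewrite -/(sq _).
apply: (le_lt_trans (@sq_le2 u v _ mu mv mw _)).
  move=> x; rewrite /fsub -subr_ge0.
  have -> : (2 * u x ^+ 2 + 2 * v x ^+ 2 - (u x - v x) ^+ 2 = (u x + v x) ^+ 2)%R.
    by ring.
  exact: sqr_ge0.
by apply: lte_add_pinfty; rewrite lte_mul_pinfty.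
Qed.

Lemma N_ge0 u : (0 <= L2inner m u u)%R.
Proof. by rewrite L2inner_sq fine_ge0// sq_ge0. Qed.

Lemma N_sym u v : L2inner m (fsub u v) (fsub u v) = L2inner m (fsub v u) (fsub v u).
Proof.
rewrite !L2inner_sq /sq; congr fine; apply: eq_integral => x _.
by rewrite /fsub; congr EFin; ring.
Qed.

Lemma N_tri u v w : L2 m u -> L2 m v -> L2 m w ->
  (L2inner m (fsub u w) (fsub u w) <=
   2 * L2inner m (fsub u v) (fsub u v) + 2 * L2inner m (fsub v w) (fsub v w))%R.
Proof.
move=> hu hv hw.
have [[huv hvw] huw] := (L2_fsub _ _ hu hv, L2_fsub _ _ hv hw, L2_fsub _ _ hu hw).
rewrite !L2inner_sq.
have : sq (fsub u w) <= 2%:E * sq (fsub u v) + 2%:E * sq (fsub v w).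
  apply: sq_le2; [exact: huv.1|exact: hvw.1|exact: huw.1|].
  move=> x; rewrite /fsub -subr_ge0.
  have -> : (2 * (u x - v x) ^+ 2 + 2 * (v x - w x) ^+ 2 - (u x - w x) ^+ 2 =
     (u x - 2 * v x + w x) ^+ 2)%R by ring.
  exact: sqr_ge0.
rewrite -(fineK (L2_fin _ huv)) -(fineK (L2_fin _ hvw)) -(fineK (L2_fin _ huw)).
by rewrite -!EFinM -EFinD lee_fin.
Qed.

Lemma N_eq0 u v : L2 m (fsub u v) ->
  (L2inner m (fsub u v) (fsub u v) <= 0)%R -> ae_eq_fun m u v.
Proof.
move=> huv hle.
have h0 : sq (fsub u v) = 0.
  rewrite -(fineK (L2_fin _ huv)); congr EFin; apply/eqP.
  by rewrite eq_le -L2inner_sq hle N_ge0.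
have mf : measurable_fun setT (fun x => ((fsub u v x) ^+ 2)%:E).
  by apply/measurable_EFinP; apply: measurable_funX; exact: huv.1.
have := (ae_eq_integral_abs m measurableT mf).1.
have -> : \int[m]_x `|((fsub u v x) ^+ 2)%:E| = sq (fsub u v).
  by apply: eq_integral => x _; rewrite gee0_abs// lee_fin sqr_ge0.
move=> /(_ h0); rewrite /ae_eq_fun; apply: filterS => x /(_ I) /=.
by move=> [] /eqP; rewrite sqrf_eq0 subr_eq0 => /eqP.
Qed.

End L2facts.

Lemma jb (R : realType) (E : metricType R) (x0 : E)
  (Q : R.-pker (borelE x0) ~> (borelE x0))
  (m0 m : {measure set (borelE x0) -> \bar R})
  (lam : borelE x0 -> R) (lam_meas : measurable_fun setT lam)
  (lam_pos : forall x, 0 < lam x) (M : R) (lam_le : forall x, lam x <= M)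
  (m_def : forall A : set (borelE x0), measurable A ->
     m A = (\int[m0]_(x in A) ((lam x)^-1)%:E)%E)
  (m0_sym : forall A B : set (borelE x0), measurable A -> measurable B ->
     (\int[m0]_(x in A) Q x B = \int[m0]_(y in B) Q y A)%E)
  (w : borelE x0 -> R) : L2 m w ->
  jump_form Q lam m w w <= 2 * M * L2inner m w w.
Proof.
move=> Lw; rewrite /jump_form.
have J0 : (\int[m]_x ((w x * w x * (1 - fine (Q x setT)) * lam x)%:E) = 0)%E.
  rewrite (eq_integral (fun=> 0%E)) ?integral0// => x _.
  by rewrite prob_kernel /= subrr mulr0 mul0r.
rewrite J0 adde0.
have hb := @jump_bound R E x0 Q m0 m lam lam_meas lam_pos M lam_le m_def m0_sym w Lw.1.
set I := (\int[m]_x _)%E in hb *.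
have I0 : (0 <= I)%E.
  apply: integral_ge0 => x _; apply: mule_ge0; first by rewrite lee_fin ltW.
  by apply: integral_ge0 => y _; rewrite lee_fin -expr2 sqr_ge0.
have Sfin := @L2_fin _ _ _ m w Lw.
have {}hb : (I <= (4 * M)%:E * @sq R E x0 m w)%E := hb.
have Ifin : I \is a fin_num.
  rewrite ge0_fin_numE//; apply: (le_lt_trans hb).
  by rewrite -(fineK Sfin) -EFinM ltry.
rewrite L2inner_sq.
rewrite -(fineK Sfin) -(fineK Ifin) -EFinM in hb.
rewrite -(fineK Ifin) -EFinM /=.
rewrite lee_fin in hb.
have M0 : 0 <= M by apply: le_trans (lam_le x0); exact: ltW.
lra.
Qed.

Theorem proposition4p1 (R : realType) (E : metricType R) (x0 : E)
  (E_lc : locally_compact [set: E]) (E_sep : separable_space E)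
  (Q : R.-pker (borelE x0) ~> (borelE x0))
  (hQ : forall x : borelE x0, Q x [set x] = 0%E)
  (m0 : {measure set (borelE x0) -> \bar R})
  (m0_sfin : sigma_finite setT m0)
  (m0_supp : forall U : set E, open U -> U !=set0 -> (0 < m0 U)%E)
  (m0_sym : forall A B : set (borelE x0), measurable A -> measurable B ->
     (\int[m0]_(x in A) Q x B = \int[m0]_(y in B) Q y A)%E)
  (lam : borelE x0 -> R) (lam_meas : measurable_fun setT lam)
  (lam_bd : exists M : R, forall x, lam x <= M)
  (lam_pos : forall x, 0 < lam x)
  (m : {measure set (borelE x0) -> \bar R})
  (m_def : forall A : set (borelE x0), measurable A ->
     m A = (\int[m0]_(x in A) ((lam x)^-1)%:E)%E)
  (m_radon : forall K : set E, compact K -> (m K < +oo)%E) :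
  forall (F' : set (borelE x0 -> R)) (Ef' : (borelE x0 -> R) -> (borelE x0 -> R) -> R),
    regular_dirichlet_subspace m F' Ef' (L2 m) (jump_form Q lam m) ->
    F' = L2 m /\
    (forall u v, L2 m u -> L2 m v -> Ef' u v = jump_form Q lam m u v).
Proof.
move=> F' Ef' [[hD _] [Fsub EfE]].
case: hD => DF [Fae [F0 [Fadd [Fscal [Fdense [_ [_ [_ [_ [Fpos [Fclosed _]]]]]]]]]]].
have [M lam_le] := lam_bd.
have M0 : 0 <= M by apply: le_trans (lam_le x0); exact: ltW.
set C := 2 * M + 1.
have C0 : 0 < C by rewrite /C; lra.
have Fsubf u v : F' u -> F' v -> F' (fsub u v).
  move=> Fu Fv; have := Fadd u (fun x => -1 * v x) Fu (Fscal (-1) v Fv).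
  by rewrite (_ : (fun x => _) = fsub u v)//; apply/funext => x; rewrite /fsub mulN1r.
have E1b d : F' d -> Ef' d d + L2inner m d d <= C * L2inner m d d.
  move=> Fd; rewrite EfE// /C mulrDl mul1r lerD2r.
  exact: (@jb R E x0 Q m0 m lam lam_meas lam_pos M lam_le m_def m0_sym d (DF _ Fd)).
set N := fun u => L2inner m u u.
have L2F : L2 m `<=` F'.
  move=> f Lf.
  have ex n : exists u, F' u /\ N (fsub f u) < n.+1%:R^-1.
    have p : 0 < n.+1%:R^-1 :> R by rewrite invr_gt0 ltr0Sn.
    have [u Fu hu] := Fdense f Lf _ p.
    by exists u.
  have [un hun] := choice ex.
  have Fun n : F' (un n) by have [] := hun n.
  have Lun n : L2 m (un n) by exact: DF.
  have Nun n : N (fsub f (un n)) < n.+1%:R^-1 by have [] := hun n.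
  have cauchy : forall eps : R, 0 < eps -> exists K, forall n k, (K <= n)%N -> (K <= k)%N ->
      Ef' (fsub (un n) (un k)) (fsub (un n) (un k)) +
      L2inner m (fsub (un n) (un k)) (fsub (un n) (un k)) < eps.
    move=> eps eps0; exists (Num.trunc (4 * C / eps)).+1 => n k Kn Kk.
    have hK := truncnS_gt (4 * C / eps).
    have bd j : ((Num.trunc (4 * C / eps)).+1 <= j)%N -> 4 * C < j.+1%:R * eps.
      move=> Kj; rewrite -ltr_pdivrMr//; apply: (lt_le_trans hK).
      by rewrite ler_nat; apply: leq_trans Kj _.
    have hn := bd n Kn; have hk := bd k Kk.
    apply: (le_lt_trans (E1b _ (Fsubf _ _ (Fun n) (Fun k)))).
    have tri := @N_tri _ _ _ m _ _ _ (Lun n) Lf (Lun k).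
    rewrite (@N_sym _ _ _ m (un n) f) in tri.
    have h1 := Nun n; have h2 := Nun k.
    rewrite /N in h1 h2.
    set X := L2inner m (fsub (un n) (un k)) (fsub (un n) (un k)) in tri *.
    set A := L2inner m (fsub f (un n)) (fsub f (un n)) in tri h1.
    set B := L2inner m (fsub f (un k)) (fsub f (un k)) in tri h2.
    set a := n.+1%:R^-1 in h1. set b := k.+1%:R^-1 in h2.
    have i1 : a * n.+1%:R = 1 :> R by rewrite mulVf.
    have i2 : b * k.+1%:R = 1 :> R by rewrite mulVf.
    have p1 : 0 < a :> R by rewrite invr_gt0.
    have p2 : 0 < b :> R by rewrite invr_gt0.
    have q1 : 4 * C * a < eps.
      by have := hn; rewrite -(ltr_pM2r p1) (mulrAC (n.+1%:R) eps a) (mulrC n.+1%:R a) i1 mul1r.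
    have q2 : 4 * C * b < eps.
      by have := hk; rewrite -(ltr_pM2r p2) (mulrAC (k.+1%:R) eps b) (mulrC k.+1%:R b) i2 mul1r.
    have r1 : C * X <= C * (2 * A + 2 * B) by rewrite ler_pM2l.
    have r2 : C * A <= C * a by rewrite ler_pM2l// ltW.
    have r3 : C * B <= C * b by rewrite ler_pM2l// ltW.
    lra.
  have [u Fu hcvg] := Fclosed un Fun cauchy.
  have Lu := DF _ Fu.
  set r := fun n => 2 * n.+1%:R^-1 + 2 * (Ef' (fsub (un n) u) (fsub (un n) u) +
      L2inner m (fsub (un n) u) (fsub (un n) u)).
  have hr : r @ \oo --> (0 : R).
    rewrite -[0](addr0) -[X in X + _](mulr0 2) -[X in _ + X](mulr0 2).
    apply: cvgD; apply: cvgMr => //; exact: cvg_harmonic.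
  have le_r n : N (fsub f u) <= r n.
    have tri := @N_tri _ _ _ m _ _ _ Lf (Lun n) Lu.
    have := Nun n; have := Fpos _ (Fsubf _ _ (Fun n) Fu).
    rewrite /N /r in tri *; move: (n.+1%:R^-1 : R) => a; lra.
  have Nle : N (fsub u f) <= 0.
    rewrite /N N_sym -/(N _).
    have -> : (0 : R) = lim (r @ \oo) by apply/esym; exact: cvg_lim.
    apply: limr_ge; first by apply/cvg_ex; exists 0.
    by apply: nearW.
  have ae := @N_eq0 _ _ _ m _ _ (@L2_fsub _ _ _ m _ _ Lu Lf) Nle.
  exact: Fae u f Fu Lf ae.
have FL : F' = L2 m by apply/seteqP; split => [f|f]; [exact: DF|exact: L2F].
split => // u v Lu Lv; apply: EfE; by rewrite FL.
Qed.
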